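(* Let $\Gamma$ be a group generated by a finite set $X$. If $\Gamma$ has solvable Equality Problem on a set $S\times S$, where $S\subset\mathbb F_X$ is UB-generic, then $\Gamma$ has solvable Word Problem.
   Context: $\mathbb F_X$ is the free group on $X$, $\pi:\mathbb F_X\to\Gamma$ the canonical epimorphism, $|\omega|$ the reduced word length, $B_n=\{\omega\in\mathbb F_X:|\omega|\le n\}$. $S\subset\mathbb F_X$ is UB-generic if $\limsup_{n\to\infty}\max_{\omega\in\mathbb F_X}\frac{|S\cap\omega B_n|}{|B_n|}=1$. $\Gamma$ has solvable Word Problem if there is an algorithm deciding for every $\omega\in\mathbb F_X$ whether $\pi(\omega)$ is trivial. $\Gamma$ has solvable Equality Problem on $T\subset\mathbb F_X^2$ if there is a partial algorithm that halts at least on every $(\omega_1,\omega_2)\in T$ and, whenever it halts, correctly decides whether $\pi(\omega_1)=\pi(\omega_2)$. *)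

(* Defs.v *)
From mathcomp Require Import all_boot all_order all_algebra.
Set Implicit Arguments. Unset Strict Implicit. Unset Printing Implicit Defensive.
Import Order.TTheory GRing.Theory Num.Theory.

(* A model of computation: (untyped) mu-recursive functions on nat,   *)
(* with a big-step evaluation relation.  "Algorithm" = code.          *)
Inductive code : Type :=
  | CZero : code
  | CSucc : code
  | CProj : nat -> code
  | CComp : code -> seq code -> code
  | CPrim : code -> code -> code
  | CMu   : code -> code.

Inductive eval : code -> seq nat -> nat -> Prop :=
  | ev_zero v : eval CZero v 0
  | ev_succ x v : eval CSucc (x :: v) x.+1
  | ev_proj i v : (i < size v)%N -> eval (CProj i) v (nth 0%N v i)
  | ev_comp f gs v ws y : evals gs v ws -> eval f ws y -> eval (CComp f gs) v y
  | ev_prim0 f g v y : eval f v y -> eval (CPrim f g) (0%N :: v) y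
  | ev_primS f g n v y z :
      eval (CPrim f g) (n :: v) y -> eval g (n :: y :: v) z ->
      eval (CPrim f g) (n.+1 :: v) z
  | ev_mu f v y : eval f (y :: v) 0 ->
      (forall z, (z < y)%N -> exists m, eval f (z :: v) m.+1) ->
      eval (CMu f) v y
with evals : seq code -> seq nat -> seq nat -> Prop :=
  | evs_nil v : evals [::] v [::]
  | evs_cons g gs v w ws : eval g v w -> evals gs v ws -> evals (g :: gs) v (w :: ws).

(* Encoding of sequences of naturals into nat (Cantor pairing). *)
Definition cpair (x y : nat) : nat := ((x + y) * (x + y).+1) %/ 2 + y.
Fixpoint enc_list (s : seq nat) : nat :=
  if s is x :: s' then (cpair x (enc_list s')).+1 else 0%N.

(* The free group F_X on X = 'I_k, as reduced words.                  *)
(* A letter (i, false) is x_i, (i, true) is x_i^{-1}.                 *)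
Definition letter (k : nat) := ('I_k * bool)%type.

Definition cancelp k (a b : letter k) : bool := (a.1 == b.1) && (a.2 != b.2).

Definition reduced k (s : seq (letter k)) : bool :=
  sorted (fun a b => ~~ cancelp a b) s.

Definition push k (a : letter k) (s : seq (letter k)) : seq (letter k) :=
  match s with
  | b :: s' => if cancelp a b then s' else a :: s
  | [::] => [:: a]
  end.

Definition freduce k (s : seq (letter k)) : seq (letter k) := foldr (@push k) [::] s.
Definition fmul k (u v : seq (letter k)) : seq (letter k) := freduce (u ++ v).

Definition words_of_len k (m : nat) : seq (seq (letter k)) :=
  iter m (fun L => [seq a :: s | a <- enum {: letter k}, s <- L]) [:: [::]].

Definition ball k (n : nat) : seq (seq (letter k)) :=
  filter (@reduced k) (flatten [seq words_of_len k m | m <- iota 0 n.+1]).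

Definition tball k (w : seq (letter k)) (n : nat) : seq (seq (letter k)) :=
  undup [seq fmul w v | v <- ball k n].

Local Open Scope ring_scope.

Definition density k (S : pred (seq (letter k))) (w : seq (letter k)) (n : nat) : rat :=
  (count S (tball w n))%:R / (size (ball k n))%:R.

(* limsup_n max_w density = 1.  Since density <= 1 always, this is:
   for every eps > 0 and every N there is n >= N and w in F_X with
   density > 1 - eps. *)
Definition UB_generic k (S : pred (seq (letter k))) : Prop :=
  forall eps : rat, 0 < eps -> forall N : nat,
    exists n : nat, (N <= n)%N /\
      exists w : seq (letter k), reduced w /\ 1 - eps < density S w n.

Local Close Scope ring_scope.

Definition is_group (G : Type) (mul : G -> G -> G) (inv : G -> G) (one : G) : Prop :=
  (forall x y z, mul x (mul y z) = mul (mul x y) z) /\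
  (forall x, mul one x = x) /\
  (forall x, mul (inv x) x = one).

Definition evalw k (G : Type) (mul : G -> G -> G) (inv : G -> G) (one : G)
  (gen : 'I_k -> G) (w : seq (letter k)) : G :=
  foldr (fun a g => mul (if a.2 then inv (gen a.1) else gen a.1) g) one w.

Definition generates k (G : Type) (mul : G -> G -> G) (inv : G -> G) (one : G)
  (gen : 'I_k -> G) : Prop :=
  forall g : G, exists w : seq (letter k), reduced w /\ evalw mul inv one gen w = g.

Definition enc_letter k (a : letter k) : nat := ((a.1 : nat).*2 + a.2)%N.
Definition enc_word k (w : seq (letter k)) : nat := enc_list (map (@enc_letter k) w).

Definition solvable_WP k (G : Type) (mul : G -> G -> G) (inv : G -> G) (one : G)
  (gen : 'I_k -> G) : Prop :=
  exists c : code, forall w : seq (letter k), reduced w ->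
    (evalw mul inv one gen w = one -> eval c [:: enc_word w] 1) /\
    (evalw mul inv one gen w <> one -> eval c [:: enc_word w] 0).

Definition solvable_EqP_on k (G : Type) (mul : G -> G -> G) (inv : G -> G) (one : G)
  (gen : 'I_k -> G) (T : seq (letter k) -> seq (letter k) -> Prop) : Prop :=
  exists c : code,
    (forall w1 w2, reduced w1 -> reduced w2 -> T w1 w2 ->
       exists b, eval c [:: enc_word w1; enc_word w2] b) /\
    (forall w1 w2 b, reduced w1 -> reduced w2 ->
       eval c [:: enc_word w1; enc_word w2] b ->
       (evalw mul inv one gen w1 = evalw mul inv one gen w2 -> b = 1%N) /\
       (evalw mul inv one gen w1 <> evalw mul inv one gen w2 -> b = 0%N)).

(* Main.v *)
Require Import Defs.
From mathcomp Require Import all_boot all_order all_algebra zify ring lra.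
Set Implicit Arguments. Unset Strict Implicit. Unset Printing Implicit Defensive.

Definition computes (c : code) (n : nat) (F : seq nat -> nat) : Prop :=
  forall v, size v = n -> eval c v (F v).

Lemma computes_ext c n F G : (forall v, size v = n -> F v = G v) ->
  computes c n F -> computes c n G.
Proof. by move=> E H v Hv; rewrite -E //; apply: H. Qed.

Lemma evals_size gs v ws : evals gs v ws -> size ws = size gs.
Proof. by elim=> //= g gs' v' w ws' _ _ ->. Qed.

Lemma comp_c f m F cs n (W : seq nat -> seq nat) : computes f m F ->
  (forall v, size v = n -> evals cs v (W v) /\ size (W v) = m) ->
  computes (CComp f cs) n (fun v => F (W v)).
Proof. move=> Hf HW v Hv; have [H1 H2] := HW v Hv; exact: ev_comp H1 (Hf _ H2). Qed.

Definition ar (v : seq nat) i := nth 0 v i.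

Lemma proj_c i n : i < n -> computes (CProj i) n (fun v => ar v i).
Proof. by move=> Hi v Hv; apply: ev_proj; rewrite Hv. Qed.

Fixpoint constc (c : nat) : code := if c is c'.+1 then CComp CSucc [:: constc c'] else CZero.

Lemma const_c c n : computes (constc c) n (fun _ => c).
Proof.
elim: c => [|c IH] v Hv /=; first exact: ev_zero.
apply: ev_comp; first by apply: evs_cons; [exact: IH|exact: evs_nil].
exact: ev_succ.
Qed.

Lemma succ_c g n G : computes g n G -> computes (CComp CSucc [:: g]) n (fun v => (G v).+1).
Proof.
move=> Hg v Hv; apply: ev_comp; first by apply: evs_cons; [exact: Hg|exact: evs_nil].
exact: ev_succ.
Qed.

Fixpoint primf (F G : seq nat -> nat) (x : nat) (v : seq nat) : nat :=
  if x is x'.+1 then G (x' :: primf F G x' v :: v) else F v.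

Lemma prim_c f g n F G : computes f n F -> computes g n.+2 G ->
  computes (CPrim f g) n.+1 (fun v => primf F G (head 0 v) (behead v)).
Proof.
move=> Hf Hg [|x v] //= [Hv]; elim: x => [|x IH] /=.
  by apply: ev_prim0; apply: Hf.
by apply: ev_primS; [exact: IH| apply: Hg => /=; rewrite Hv].
Qed.

Definition computes1 f (op : nat -> nat) := computes f 1 (fun v => op (ar v 0)).
Definition computes2 f (op : nat -> nat -> nat) := computes f 2 (fun v => op (ar v 0) (ar v 1)).
Definition computes3 f (op : nat -> nat -> nat -> nat) :=
  computes f 3 (fun v => op (ar v 0) (ar v 1) (ar v 2)).

Lemma ap1_c f op g n G : computes1 f op -> computes g n G ->
  computes (CComp f [:: g]) n (fun v => op (G v)).
Proof.
move=> Hf Hg; apply: (comp_c (W := fun v => [:: G v])) Hf _ => v Hv; split=> //.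
by apply: evs_cons; [exact: Hg|exact: evs_nil].
Qed.

Lemma ap2_c f op g h n G H : computes2 f op -> computes g n G -> computes h n H ->
  computes (CComp f [:: g; h]) n (fun v => op (G v) (H v)).
Proof.
move=> Hf Hg Hh; apply: (comp_c (W := fun v => [:: G v; H v])) Hf _ => v Hv; split=> //.
by apply: evs_cons; [exact: Hg|apply: evs_cons; [exact: Hh|exact: evs_nil]].
Qed.

Lemma ap3_c f op g h i n G H I : computes3 f op -> computes g n G -> computes h n H ->
  computes i n I ->
  computes (CComp f [:: g; h; i]) n (fun v => op (G v) (H v) (I v)).
Proof.
move=> Hf Hg Hh Hi; apply: (comp_c (W := fun v => [:: G v; H v; I v])) Hf _ => v Hv; split=> //.
apply: evs_cons; first exact: Hg.
by apply: evs_cons; [exact: Hh|apply: evs_cons; [exact: Hi|exact: evs_nil]].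
Qed.

Notation P0 := (CProj 0).
Notation P1 := (CProj 1).
Notation P2 := (CProj 2).
Notation P3 := (CProj 3).

Definition Cpred := CPrim CZero P0.
Lemma pred_c : computes1 Cpred predn.
Proof.
rewrite /computes1.
have := prim_c (@const_c 0 0) (proj_c (ltn0Sn 1)).
apply: computes_ext.

by move=> [|[|x] []] //.
Qed.

Definition Cadd := CPrim P0 (CComp CSucc [:: P1]).
Lemma add_c : computes2 Cadd addn.
Proof.
rewrite /computes1 /computes2.
have := prim_c (proj_c (ltn0Sn 0)) (succ_c (proj_c (isT : 1 < 3))).
apply: computes_ext => -[|x [|y []]] //= _; rewrite /ar /=.
by elim: x => //= x ->.
Qed.

Definition Cmul := CPrim CZero (CComp Cadd [:: P1; P2]).
Lemma mul_c : computes2 Cmul muln.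
Proof.
rewrite /computes1 /computes2.
have := prim_c (@const_c 0 1) (ap2_c add_c (proj_c (isT : 1 < 3)) (proj_c (isT : 2 < 3))).
apply: computes_ext => -[|x [|y []]] //= _; rewrite /ar /=.
by elim: x => //= x ->; rewrite mulSn addnC.
Qed.

Definition Csubr := CPrim P0 (CComp Cpred [:: P1]).
Definition Csub := CComp Csubr [:: P1; P0].
Lemma sub_c : computes2 Csub subn.
Proof.
have H : computes2 Csubr (fun y x => x - y).
  rewrite /computes2; have := prim_c (proj_c (ltn0Sn 0)) (ap1_c pred_c (proj_c (isT : 1 < 3))).
  apply: computes_ext => -[|y [|x []]] //= _; rewrite /ar /=.
  by elim: y => //= [|y ->]; rewrite ?subn0 ?subnS.
exact: ap2_c H (proj_c (isT : 1 < 2)) (proj_c (isT : 0 < 2)).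
Qed.

Definition Cisz := CPrim (constc 1) CZero.
Lemma isz_c : computes1 Cisz (fun x => nat_of_bool (x == 0)).
Proof.
rewrite /computes1 /computes2.
have := prim_c (@const_c 1 0) (@const_c 0 2).
by apply: computes_ext => -[|[|x] []].
Qed.

Definition Csg := CComp Cisz [:: Cisz].
Lemma sg_c : computes1 Csg (fun x => nat_of_bool (x != 0)).
Proof.
rewrite /computes1 /computes2.
have := ap1_c isz_c isz_c.
by apply: computes_ext => -[|[|x] []].
Qed.

Definition Cite (C A B : code) :=
  CComp Cadd [:: CComp Cmul [:: CComp Csg [:: C]; A]; CComp Cmul [:: CComp Cisz [:: C]; B]].
Lemma ite_c C A B n FC FA FB : computes C n FC -> computes A n FA -> computes B n FB ->
  computes (Cite C A B) n (fun v => if FC v != 0 then FA v else FB v).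
Proof.
move=> HC HA HB.
have := ap2_c add_c (ap2_c mul_c (ap1_c sg_c HC) HA) (ap2_c mul_c (ap1_c isz_c HC) HB).
apply: computes_ext => v _; by case: (FC v) => //=; rewrite ?mul0n ?mul1n ?addn0.
Qed.

Definition Cleq (A B : code) := CComp Cisz [:: CComp Csub [:: A; B]].
Lemma leq_c A B n FA FB : computes A n FA -> computes B n FB ->
  computes (Cleq A B) n (fun v => nat_of_bool (FA v <= FB v)).
Proof.
move=> HA HB; have := ap1_c isz_c (ap2_c sub_c HA HB).
by apply: computes_ext => v _; rewrite subn_eq0.
Qed.

Definition Ceq (A B : code) := CComp Cmul [:: Cleq A B; Cleq B A].
Lemma eq_c A B n FA FB : computes A n FA -> computes B n FB ->
  computes (Ceq A B) n (fun v => nat_of_bool (FA v == FB v)).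
Proof.
move=> HA HB; have := ap2_c mul_c (leq_c HA HB) (leq_c HB HA).
apply: computes_ext => v _; rewrite eqn_leq.
by case: (FA v <= FB v); case: (FB v <= FA v).
Qed.

Fixpoint tri s := if s is s'.+1 then tri s' + s else 0.

Lemma tri2 s : tri s * 2 = s * s.+1.
Proof. elim: s => //= s IH; rewrite mulnDl IH; lia. Qed.

Lemma tri_ge s : s <= tri s.
Proof. elim: s => //= s IH; lia. Qed.

Lemma tri_mono a b : a <= b -> tri a <= tri b.
Proof. elim: b => [|b IH]; first by rewrite leqn0 => /eqP ->.
rewrite leq_eqVlt => /orP [/eqP -> //| H] /=; have := IH H; lia. Qed.

Definition cpairN x y := tri (x + y) + y.
Lemma cpairE x y : cpair x y = cpairN x y.
Proof. by rewrite /cpair /cpairN -tri2 mulnK. Qed.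

Definition sN n := count (fun j => tri j.+1 <= n) (iota 0 n).
Definition sndN n := n - tri (sN n).
Definition fstN n := sN n - sndN n.

Lemma sN_pair x y : sN (cpairN x y) = x + y.
Proof.
rewrite /sN /cpairN.
have E : {in iota 0 (tri (x + y) + y), (fun j => tri j.+1 <= tri (x + y) + y) =1 (fun j => j < 0 + (x+y))}.
  move=> j _ /=; apply/idP/idP.
    apply: contraLR; rewrite -leqNgt -ltnNge => H.
    have := tri_mono H; rewrite /= -/tri add0n; move: H; rewrite add0n; lia.
  rewrite add0n => H; have := tri_mono H; rewrite /= -/tri; lia.
rewrite (eq_in_count E) -size_filter filter_iota_ltn ?size_iota //.
have := tri_ge (x + y); lia.
Qed.

Lemma snd_pair x y : sndN (cpairN x y) = y.
Proof. by rewrite /sndN sN_pair /cpairN addKn. Qed.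
Lemma fst_pair x y : fstN (cpairN x y) = x.
Proof. by rewrite /fstN snd_pair sN_pair addnK. Qed.

Lemma countS (p : pred nat) x : count p (iota 0 x.+1) = count p (iota 0 x) + p x.
Proof. by rewrite -addn1 iotaD count_cat /= addn0 add0n. Qed.

Definition Ctri := CPrim CZero (CComp Cadd [:: P1; CComp CSucc [:: P0]]).
Lemma tri_c : computes1 Ctri tri.
Proof.
rewrite /computes1.
have := prim_c (@const_c 0 0) (ap2_c add_c (proj_c (isT : 1 < 2)) (succ_c (proj_c (isT : 0 < 2)))).
apply: computes_ext => -[|x []] //= _; rewrite /ar /=.
by elim: x => //= x ->.
Qed.

Definition Csum := CPrim CZero (CComp Cadd [:: P1; Cleq (CComp Ctri [:: CComp CSucc [:: P0]]) P2]).
Definition Cs := CComp Csum [:: P0; P0].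
Lemma s_c : computes1 Cs sN.
Proof.
rewrite /computes1.
have H : computes2 Csum (fun j n => count (fun j => tri j.+1 <= n) (iota 0 j)).
  rewrite /computes2.
  have := prim_c (@const_c 0 1) (ap2_c add_c (proj_c (isT : 1 < 3))
     (leq_c (ap1_c tri_c (succ_c (proj_c (isT : 0 < 3)))) (proj_c (isT : 2 < 3)))).
  apply: computes_ext => -[|x [|n []]] //= _; rewrite /ar /=.
  elim: x => [|x IH] //; rewrite countS -IH //.
have := ap2_c H (proj_c (isT : 0 < 1)) (proj_c (isT : 0 < 1)).
by apply: computes_ext.
Qed.

Definition Csnd := CComp Csub [:: P0; CComp Ctri [:: Cs]].
Lemma snd_c : computes1 Csnd sndN.
Proof.
have := ap2_c sub_c (proj_c (isT : 0 < 1)) (ap1_c tri_c s_c).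
by apply: computes_ext.
Qed.
Definition Cfst := CComp Csub [:: Cs; Csnd].
Lemma fst_c : computes1 Cfst fstN.
Proof.
have := ap2_c sub_c s_c snd_c.
by apply: computes_ext.
Qed.

Definition hdN n := fstN n.-1.
Definition tlN n := sndN n.-1.
Definition ConsN x s := (cpairN x s).+1.

Definition Chd := CComp Cfst [:: Cpred].
Lemma hd_c : computes1 Chd hdN.
Proof. exact: ap1_c fst_c pred_c. Qed.
Definition Ctl := CComp Csnd [:: Cpred].
Lemma tl_c : computes1 Ctl tlN.
Proof. exact: ap1_c snd_c pred_c. Qed.

Definition Ccons := CComp CSucc [:: CComp Cadd [:: CComp Ctri [:: CComp Cadd [:: P0; P1]]; P1]].
Lemma cons_c : computes2 Ccons ConsN.
Proof.
exact: succ_c (ap2_c add_c (ap1_c tri_c (ap2_c add_c (proj_c (isT : 0 < 2)) (proj_c (isT : 1 < 2))))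
   (proj_c (isT : 1 < 2))).
Qed.

Lemma enc_cons x l : enc_list (x :: l) = ConsN x (enc_list l).
Proof. by rewrite /= cpairE. Qed.
Lemma hd_cons x s : hdN (ConsN x s) = x.
Proof. exact: fst_pair. Qed.
Lemma tl_cons x s : tlN (ConsN x s) = s.
Proof. exact: snd_pair. Qed.
Lemma ConsN_neq0 x s : ConsN x s != 0.
Proof. by []. Qed.

Definition Codd := CPrim CZero (CComp Cisz [:: P1]).
Lemma odd_c : computes1 Codd (fun x => nat_of_bool (odd x)).
Proof.
rewrite /computes1.
have := prim_c (@const_c 0 0) (ap1_c isz_c (proj_c (isT : 1 < 2))).
apply: computes_ext => -[|x []] //= _; rewrite /ar /=.
by elim: x => //= x ->; case: (odd x).
Qed.

Definition Chalf := CPrim CZero (CComp Cadd [:: P1; CComp Codd [:: P0]]).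
Lemma half_c : computes1 Chalf half.
Proof.
rewrite /computes1.
have := prim_c (@const_c 0 0) (ap2_c add_c (proj_c (isT : 1 < 2)) (ap1_c odd_c (proj_c (isT : 0 < 2)))).
apply: computes_ext => -[|x []] //= _; rewrite /ar /=.
by elim: x => //= x ->; rewrite uphalf_half addnC.
Qed.

Definition cancelN x y := (x./2 == y./2) && (x != y).
Definition Ccan := CComp Cmul [:: Ceq (CComp Chalf [:: P0]) (CComp Chalf [:: P1]);
                                 CComp Cisz [:: Ceq P0 P1]].
Lemma can_c : computes2 Ccan (fun x y => nat_of_bool (cancelN x y)).
Proof.
have := ap2_c mul_c (eq_c (ap1_c half_c (proj_c (isT : 0 < 2))) (ap1_c half_c (proj_c (isT : 1 < 2))))
   (ap1_c isz_c (eq_c (proj_c (isT : 0 < 2)) (proj_c (isT : 1 < 2)))).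
apply: computes_ext => v _; rewrite /cancelN.
by case: (ar v 0 == ar v 1); case: (_ == _).
Qed.

Definition pushN x acc := if (acc != 0) && cancelN x (hdN acc) then tlN acc else ConsN x acc.
Definition Cpush := Cite (CComp Cmul [:: CComp Csg [:: P1]; CComp Ccan [:: P0; CComp Chd [:: P1]]])
   (CComp Ctl [:: P1]) (CComp Ccons [:: P0; P1]).
Lemma push_c : computes2 Cpush pushN.
Proof.
have := ite_c (ap2_c mul_c (ap1_c sg_c (proj_c (isT : 1 < 2)))
                 (ap2_c can_c (proj_c (isT : 0 < 2)) (ap1_c hd_c (proj_c (isT : 1 < 2)))))
   (ap1_c tl_c (proj_c (isT : 1 < 2))) (ap2_c cons_c (proj_c (isT : 0 < 2)) (proj_c (isT : 1 < 2))).
apply: computes_ext => v _; rewrite /pushN.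
by case: (ar v 1 != 0); case: (cancelN _ _).
Qed.

Definition Ccap K := Cite (Cleq P0 (constc K)) P0 (constc K).
Lemma cap_c K : computes1 (Ccap K) (fun x => minn x K).
Proof.
have := ite_c (leq_c (proj_c (isT : 0 < 1)) (@const_c K 1)) (proj_c (isT : 0 < 1)) (@const_c K 1).
apply: computes_ext => v _; rewrite /minn.
case: ltngtP => H; rewrite ?(ltnW H) //= ?leqNgt ?H //.
Qed.

Definition tlsN j r := iter j tlN r.
Definition Ctails := CPrim P0 (CComp Ctl [:: P1]).
Lemma tails_c : computes2 Ctails tlsN.
Proof.
rewrite /computes2.
have := prim_c (proj_c (isT : 0 < 1)) (ap1_c tl_c (proj_c (isT : 1 < 3))).
apply: computes_ext => -[|x [|r []]] //= _; rewrite /ar /=.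
by elim: x => //= x ->.
Qed.

Fixpoint fredN K j r acc := if j is j'.+1 then
  (let s := tlsN j' r in if s != 0 then pushN (minn (hdN s) K) (fredN K j' r acc) else fredN K j' r acc)
  else acc.

Definition CFred K := CPrim P1 (Cite (CComp Ctails [:: P0; P2])
   (CComp Cpush [:: CComp (Ccap K) [:: CComp Chd [:: CComp Ctails [:: P0; P2]]]; P1]) P1).
Lemma fred_c K : computes3 (CFred K) (fredN K).
Proof.
rewrite /computes3.
have TS := ap2_c tails_c (proj_c (isT : 0 < 4)) (proj_c (isT : 2 < 4)).
have := prim_c (proj_c (isT : 1 < 2)) (ite_c TS (ap2_c push_c (ap1_c (cap_c K) (ap1_c hd_c TS))
          (proj_c (isT : 1 < 4))) (proj_c (isT : 1 < 4))).
apply: computes_ext => -[|x [|r [|a []]]] //= _; rewrite /ar /=.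
by elim: x => //= x ->.
Qed.

Lemma tls_enc j l : tlsN j (enc_list l) = enc_list (drop j l).
Proof.
elim: j l => [|j IH] l; first by rewrite drop0.
rewrite /tlsN iterSr -/(tlsN j _).
case: l => [|x l] /=; last by rewrite cpairE -/(ConsN _ _) tl_cons IH.
by have -> : tlN 0 = 0 by []; exact: (IH [::]).
Qed.

Lemma enc_size l : size l <= enc_list l.
Proof. elim: l => //= x l IH; rewrite cpairE /cpairN; lia. Qed.

Lemma fred_enc K j l acc :
  fredN K j (enc_list l) acc = foldr pushN acc (rev (map (minn^~ K) (take j l))).
Proof.
elim: j => [|j IH] /=; first by rewrite take0.
rewrite tls_enc IH.
case: (ltnP j (size l)) => Hj.
  rewrite (take_nth 0 Hj) map_rcons rev_rcons /=.
  rewrite (drop_nth 0 Hj) enc_cons hd_cons.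
  by rewrite ConsN_neq0.
by rewrite drop_oversize //= take_oversize // take_oversize // ltnW.
Qed.

Lemma fred_enc_full K l acc :
  fredN K (enc_list l) (enc_list l) acc = foldr pushN acc (rev (map (minn^~ K) l)).
Proof. by rewrite fred_enc take_oversize // enc_size. Qed.

Definition ocode (o : option nat) := if o is Some y then y.+1 else 0.

Fixpoint primo (F G : seq nat -> option nat) (x : nat) (v : seq nat) : option nat :=
  if x is x'.+1 then (if primo F G x' v is Some y then G (x' :: y :: v) else None) else F v.

Fixpoint must (R : nat -> option nat) (j : nat) : nat :=
  if j is j'.+1 then (let s := must R j' in if s != 0 then s else
     match R j' with None => 1 | Some 0 => j'.+2 | Some _ => 0 end) else 0.

Definition mures (s : nat) : option nat := if s is z.+2 then Some z else None.

Fixpoint run (t : nat) (f : code) (v : seq nat) {struct f} : option nat :=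
  match f with
  | CZero => Some 0
  | CSucc => if v is x :: _ then Some x.+1 else None
  | CProj i => if i < size v then Some (nth 0 v i) else None
  | CComp f gs => let os := map (fun g => run t g v) gs in
                  if all isSome os then run t f (map (odflt 0) os) else None
  | CPrim f g => if v is x :: v' then primo (run t f) (run t g) x v' else None
  | CMu f => mures (must (fun j => run t f (j :: v)) t)
  end.

Fixpoint allc (cs : seq code) (final : code) : code :=
  if cs is c :: cs' then Cite c (allc cs' final) CZero else final.

Definition projs a b := [seq CProj i | i <- iota a b].

Definition MUSTEP (Bf : code) n :=
  let o := CComp Bf (P0 :: projs 2 n.+1) in
  Cite P1 P1 (Cite o (Cite (Ceq o (constc 1)) (CComp CSucc [:: CComp CSucc [:: P0]]) CZero) (constc 1)).

Fixpoint B (f : code) (n : nat) {struct f} : code :=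
  match f with
  | CZero => constc 1
  | CSucc => if n is _.+1 then CComp CSucc [:: CComp CSucc [:: P0]] else CZero
  | CProj i => if i < n then CComp CSucc [:: CProj i] else CZero
  | CComp f gs => allc (map (fun g => B g n) gs)
        (CComp (B f (size gs)) (rcons (map (fun g => CComp Cpred [:: B g n]) gs) (CProj n)))
  | CPrim f g => if n is m.+1 then CPrim (B f m)
        (Cite P1 (CComp (B g m.+2) (P0 :: CComp Cpred [:: P1] :: projs 2 m.+1)) CZero) else CZero
  | CMu f => CComp Cpred [:: CComp (CPrim CZero (MUSTEP (B f n.+1) n)) (CProj n :: projs 0 n.+1)]
  end.

Definition Bspec f n (v : seq nat) := ocode (run (nth 0 v n) f (take n v)).

Fixpoint AllP (P : code -> Prop) (gs : seq code) : Prop :=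
  if gs is g :: gs' then P g /\ AllP P gs' else True.

Section CodeInd.
Variable P : code -> Prop.
Hypothesis HZ : P CZero.
Hypothesis HS : P CSucc.
Hypothesis HP : forall i, P (CProj i).
Hypothesis HC : forall f gs, P f -> AllP P gs -> P (CComp f gs).
Hypothesis HR : forall f g, P f -> P g -> P (CPrim f g).
Hypothesis HM : forall f, P f -> P (CMu f).
Fixpoint code_ind2 (f : code) : P f :=
  match f with
  | CZero => HZ | CSucc => HS | CProj i => HP i
  | CComp f gs => HC (code_ind2 f)
      ((fix lrec (gs : seq code) : AllP P gs :=
         match gs with [::] => I | g :: gs' => conj (code_ind2 g) (lrec gs') end) gs)
  | CPrim f g => HR (code_ind2 f) (code_ind2 g)
  | CMu f => HM (code_ind2 f)
  end.
End CodeInd.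

Lemma evals_rcons cs c v ws w : evals cs v ws -> eval c v w -> evals (rcons cs c) v (rcons ws w).
Proof.
elim=> [v'|g gs v' w' ws' Hg _ IH] Hc /=; first by apply: evs_cons => //; exact: evs_nil.
by apply: evs_cons => //; apply: IH.
Qed.

Lemma evals_map (h : code -> code) (sp : code -> seq nat -> nat) gs n v :
  AllP (fun g => computes (h g) n (sp g)) gs -> size v = n ->
  evals (map h gs) v (map (fun g => sp g v) gs).
Proof.
elim: gs => [|g gs IH] /=; first by move=> _ _; exact: evs_nil.
by move=> [Hg Hgs] Hv; apply: evs_cons; [exact: Hg|exact: IH].
Qed.

Lemma projs_evals a b v : a + b <= size v ->
  evals (projs a b) v [seq nth 0 v i | i <- iota a b].
Proof.
elim: b a => [|b IH] a /= H; first exact: evs_nil.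
apply: evs_cons; first by apply: ev_proj; lia.
by apply: IH; lia.
Qed.

Lemma nth_iota_cat (p s : seq nat) : [seq nth 0 (p ++ s) i | i <- iota (size p) (size s)] = s.
Proof.
elim: s p => [|x s IH] p //=.
rewrite nth_cat ltnn subnn /= -cat_rcons.
by have := IH (rcons p x); rewrite size_rcons => ->.
Qed.

Lemma allc_c (h : code -> code) (sp : code -> seq nat -> nat) gs fin n FF :
  AllP (fun g => computes (h g) n (sp g)) gs -> computes fin n FF ->
  computes (allc (map h gs) fin) n (fun v => if all (fun g => sp g v != 0) gs then FF v else 0).
Proof.
elim: gs => [|g gs IH] //= [Hg Hgs] Hf.
have := ite_c Hg (IH Hgs Hf) (@const_c 0 n).
apply: computes_ext => v _.
by case: (sp g v != 0).
Qed.

Lemma AllP_impl (P Q : code -> Prop) gs : (forall g, P g -> Q g) -> AllP P gs -> AllP Q gs.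
Proof. move=> H; elim: gs => //= g gs IH [Hg Hgs]; split; [exact: H|exact: IH]. Qed.

Lemma primf_ocode (FF GG : seq nat -> nat) (Fo Go : seq nat -> option nat) v v' x :
  FF v = ocode (Fo v') ->
  (forall y x', GG (x' :: y :: v) = if y != 0 then ocode (Go (x' :: y.-1 :: v')) else 0) ->
  primf FF GG x v = ocode (primo Fo Go x v').
Proof.
move=> HF HG; elim: x => [|x IH] //=.
by rewrite HG IH; case: (primo _ _ _ _).
Qed.

Lemma primf_must (ST : seq nat -> nat) (R : nat -> option nat) v j :
  (forall j s, ST (j :: s :: v) = if s != 0 then s else
      match R j with None => 1 | Some 0 => j.+2 | Some _ => 0 end) ->
  primf (fun _ => 0) ST j v = must R j.
Proof. by move=> H; elim: j => [|j IH] //=; rewrite H IH. Qed.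

Theorem B_c f : forall n, computes (B f n) n.+1 (Bspec f n).
Proof.
elim/code_ind2: f.
- move=> n; apply: computes_ext (@const_c 1 n.+1) => v _; by rewrite /Bspec.
- move=> [|m] /=.
    by apply: computes_ext (@const_c 0 1) => v Hv; rewrite /Bspec take0.
  have := succ_c (succ_c (proj_c (ltn0Sn m.+1))).
  by apply: computes_ext => -[|x v].
- move=> i n /=; case: ifP => Hi.
    have := succ_c (proj_c (ltnW Hi : i < n.+1)).
    apply: computes_ext => v Hv.
    by rewrite /Bspec /= size_take Hv ltnSn Hi nth_take.
  apply: computes_ext (@const_c 0 n.+1) => v Hv.
  by rewrite /Bspec /= size_take Hv ltnSn Hi.
- move=> f gs IHf IHgs n /=.
  set m := size gs.
  have Hargs : forall v, size v = n.+1 ->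
     evals (rcons (map (fun g => CComp Cpred [:: B g n]) gs) (CProj n)) v
        (rcons (map (fun g => (Bspec g n v).-1) gs) (nth 0 v n)) /\
     size (rcons (map (fun g => (Bspec g n v).-1) gs) (nth 0 v n)) = m.+1.
    move=> v Hv; split; last by rewrite size_rcons size_map.
    apply: evals_rcons; last by apply: ev_proj; rewrite Hv.
    apply: (evals_map (sp := fun g v => (Bspec g n v).-1)) Hv.
    apply: AllP_impl IHgs => g Hg.
    exact: ap1_c pred_c (Hg n).
  have Hfin := comp_c (IHf m) Hargs.
  have := allc_c (h := fun g => B g n) (sp := fun g => Bspec g n)
     (AllP_impl (fun g (Hg : forall n, computes (B g n) n.+1 (Bspec g n)) => Hg n) IHgs) Hfin.
  apply: computes_ext => v Hv.
  rewrite /Bspec /= all_map.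
  have -> : all (fun g => ocode (run (nth 0 v n) g (take n v)) != 0) gs =
            all (preim (fun g => run (nth 0 v n) g (take n v)) isSome) gs.
    by apply: eq_all => g /=; case: (run _ _ _).
  case: ifP => // _.
  rewrite nth_rcons size_map ltnn eqxx -cats1 take_size_cat ?size_map //.
  congr ocode; congr run.
  by rewrite -map_comp; apply: eq_map => g /=; case: (run _ _ _).
- move=> f g IHf IHg [|m] /=.
    by apply: computes_ext (@const_c 0 1) => v Hv; rewrite /Bspec take0.
  have HW : forall w, size w = m.+3 ->
     evals (P0 :: CComp Cpred [:: P1] :: projs 2 m.+1) w
        (ar w 0 :: (ar w 1).-1 :: [seq nth 0 w i | i <- iota 2 m.+1]) /\
     size (ar w 0 :: (ar w 1).-1 :: [seq nth 0 w i | i <- iota 2 m.+1]) = m.+3.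
    move=> w Hw; split; last by rewrite /= size_map size_iota.
    apply: evs_cons; first by apply: (proj_c (isT : 0 < m.+3)).
    apply: evs_cons; first by apply: (ap1_c pred_c (proj_c (isT : 1 < m.+3))).
    by apply: projs_evals; rewrite Hw.
  have Hst := ite_c (proj_c (isT : 1 < m.+3)) (comp_c (IHg m.+2) HW) (@const_c 0 m.+3).
  have := prim_c (IHf m) Hst.
  apply: computes_ext => -[|x v] // [Hv].
  have -> : Bspec (CPrim f g) m.+1 (x :: v) =
     ocode (primo (run (nth 0 v m) f) (run (nth 0 v m) g) x (take m v)) by [].
  change (primf (Bspec f m) (fun v0 : seq nat =>
     if ar v0 1 != 0 then Bspec g m.+2 [:: ar v0 0, (ar v0 1).-1 & [seq nth 0 v0 i | i <- iota 2 m.+1]]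
     else 0) x v = ocode (primo (run (nth 0 v m) f) (run (nth 0 v m) g) x (take m v))).
  apply: primf_ocode => // y x'.
  have Hm : [seq nth 0 [:: x', y & v] i | i <- iota 2 m.+1] = v.
    by have := nth_iota_cat [:: x'; y] v; rewrite Hv.
  cbv beta; rewrite Hm.
  by case: y Hm.
- move=> f IHf n /=.
  have HW : forall w, size w = n.+3 ->
     evals (P0 :: projs 2 n.+1) w (ar w 0 :: [seq nth 0 w i | i <- iota 2 n.+1]) /\
     size (ar w 0 :: [seq nth 0 w i | i <- iota 2 n.+1]) = n.+2.
    move=> w Hw; split; last by rewrite /= size_map size_iota.
    apply: evs_cons; first by apply: (proj_c (isT : 0 < n.+3)).
    by apply: projs_evals; rewrite Hw.
  have Ho := comp_c (IHf n.+1) HW.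
  have Hst := ite_c (proj_c (isT : 1 < n.+3)) (proj_c (isT : 1 < n.+3))
     (ite_c Ho (ite_c (eq_c Ho (@const_c 1 n.+3)) (succ_c (succ_c (proj_c (isT : 0 < n.+3))))
        (@const_c 0 n.+3)) (@const_c 1 n.+3)).
  have H := prim_c (@const_c 0 n.+1) Hst.
  have HW2 : forall v, size v = n.+1 ->
     evals (CProj n :: projs 0 n.+1) v (nth 0 v n :: v) /\ size (nth 0 v n :: v) = n.+2.
    move=> v Hv; split; last by rewrite /= Hv.
    apply: evs_cons; first by apply: ev_proj; rewrite Hv.
    have := projs_evals (a := 0) (b := n.+1) (v := v); rewrite Hv add0n leqnn.
    by have := nth_iota_cat [::] v; rewrite Hv /= => -> /(_ isT).
  have := ap1_c pred_c (comp_c H HW2).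
  apply: computes_ext => v Hv.
  rewrite [head _ _]/= [behead _]/=.
  set t := nth 0 v n.
  have -> : Bspec (CMu f) n v = ocode (mures (must (fun j => run t f (j :: take n v)) t)) by [].
  rewrite (@primf_must _ (fun j => run t f (j :: take n v))).
    by case: (must _ t) => [|[|z]].
  move=> j s.
  have Hm : [seq nth 0 [:: j, s & v] i | i <- iota 2 n.+1] = v.
    by have := nth_iota_cat [:: j; s] v; rewrite Hv.
  cbv beta; rewrite Hm /ar [nth _ _ 1]/= [nth _ _ 0]/=.
  case: (s != 0) => //.
  have -> : Bspec f n.+1 (j :: v) = ocode (run t f (j :: take n v)) by [].
  by case: (run t f _) => [[|y]|].
Qed.

Lemma must_inv (R : nat -> option nat) j :
  (must R j = 0 -> forall z, z < j -> exists m, R z = Some m.+1) /\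
  (forall z, must R j = z.+2 -> R z = Some 0 /\ forall z', z' < z -> exists m, R z' = Some m.+1).
Proof.
elim: j => [|j [IH1 IH2]] /=; first by split=> // z.
case: (boolP (must R j != 0)) => Hs.
  split; first by move=> E; rewrite E in Hs.
  by move=> z E; apply: IH2.
move: Hs; rewrite negbK => /eqP Hs.
case E: (R j) => [[|m]|]; split => //.
- by move=> z [<-]; split=> // z' Hz'; apply: IH1.
- move=> _ z; rewrite ltnS leq_eqVlt => /orP [/eqP ->|Hz]; first by exists m.
  exact: IH1.
Qed.

Lemma evals_of_run t gs v :
  AllP (fun g => forall v y, run t g v = Some y -> eval g v y) gs ->
  all isSome (map (fun g => run t g v) gs) ->
  evals gs v (map (odflt 0) (map (fun g => run t g v) gs)).
Proof.
elim: gs => [|g gs IH] /=; first by move=> _ _; exact: evs_nil.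
move=> [Hg Hgs] /andP [Hs Hss]; apply: evs_cons; last exact: IH.
by move: Hs; case E: (run t g v) => [y|] // _; apply: Hg.
Qed.

Theorem run_sound t f : forall v y, run t f v = Some y -> eval f v y.
Proof.
elim/code_ind2: f.
- by move=> v y [<-]; exact: ev_zero.
- by move=> [|x v] y //= [<-]; exact: ev_succ.
- by move=> i v y /=; case: ifP => // Hi [<-]; exact: ev_proj.
- move=> f gs IHf IHgs v y /=; case: ifP => // Hall Hr.
  apply: ev_comp (IHf _ _ Hr); exact: evals_of_run.
- move=> f g IHf IHg [|x v] y //=.
  elim: x y => [|x IH] y /=; first by move=> H; apply: ev_prim0; apply: IHf.
  case E: (primo _ _ x v) => [y0|] // H.
  exact: ev_primS (IH _ E) (IHg _ _ H).
- move=> f IHf v y /=.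
  case E: (must _ t) => [|[|z]] //= [<-].
  have [_ H2] := must_inv (fun j => run t f (j :: v)) t.
  have [H0 Hlt] := H2 _ E.
  apply: ev_mu; first exact: IHf.
  by move=> z' Hz'; have [m Hm] := Hlt z' Hz'; exists m; apply: IHf.
Qed.

Lemma bounded_choice (P : nat -> nat -> Prop) y :
  (forall z T T', T <= T' -> P z T -> P z T') ->
  (forall z, z < y -> exists T, P z T) -> exists T, forall z, z < y -> P z T.
Proof.
move=> Hmono; elim: y => [|y IH] H; first by exists 0.
have [T1 HT1] := IH (fun z Hz => H z (ltnW Hz)).
have [T2 HT2] := H y (ltnSn y).
exists (maxn T1 T2) => z; rewrite ltnS leq_eqVlt => /orP [/eqP ->|Hz].
  by apply: Hmono HT2; exact: leq_maxr.
by apply: Hmono (HT1 z Hz); exact: leq_maxl.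
Qed.

Lemma must_found (R : nat -> option nat) y :
  R y = Some 0 -> (forall z, z < y -> exists m, R z = Some m.+1) ->
  forall j, must R j = if j <= y then 0 else y.+2.
Proof.
move=> H0 Hlt; elim=> [|j IH] //=.
rewrite IH; case: (ltngtP j y) => Hj.
- by have [m Hm] := Hlt j Hj; rewrite Hm.
- by [].
- by rewrite Hj H0.
Qed.

Fixpoint eval_run f v y (H : eval f v y) {struct H} :
  exists t0, forall t, t0 <= t -> run t f v = Some y
with evals_run gs v ws (H : evals gs v ws) {struct H} :
  exists t0, forall t, t0 <= t -> map (fun g => run t g v) gs = map Some ws.
Proof.
- destruct H as [v|x v|i v Hi|f gs v ws y Hgs Hf|f g v y Hf|f g n v y z H1 H2|f v y Hf Hlt].
  + by exists 0.
  + by exists 0.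
  + by exists 0 => t _ /=; rewrite Hi.
  + have [T1 HT1] := evals_run _ _ _ Hgs.
    have [T2 HT2] := eval_run _ _ _ Hf.
    exists (maxn T1 T2) => t Ht /=.
    rewrite HT1 ?(leq_trans (leq_maxl _ _) Ht) // all_map.
    have -> : all (preim Some isSome) ws by apply/allP.
    rewrite -map_comp map_id_in //.
    exact: HT2 (leq_trans (leq_maxr _ _) Ht).
  + have [T HT] := eval_run _ _ _ Hf.
    by exists T => t Ht /=; apply: HT.
  + have [T1 HT1] := eval_run _ _ _ H1.
    have [T2 HT2] := eval_run _ _ _ H2.
    exists (maxn T1 T2) => t Ht /=.
    have := HT1 t (leq_trans (leq_maxl _ _) Ht) => /= ->.
    exact: HT2 (leq_trans (leq_maxr _ _) Ht).
  + have [T0 HT0] := eval_run _ _ _ Hf.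
    have [T1 HT1] := bounded_choice (P := fun z T => exists m, forall t, T <= t -> run t f (z :: v) = Some m.+1)
       (y := y) (fun z T T' HTT' '(ex_intro m Hm) => ex_intro _ m (fun t Ht => Hm t (leq_trans HTT' Ht)))
       (fun z Hz => match Hlt z Hz with ex_intro m Hm =>
           match eval_run _ _ _ Hm with ex_intro T HT => ex_intro _ T (ex_intro _ m HT) end end).
    exists (maxn (maxn T0 T1) y.+1) => t Ht /=.
    rewrite (@must_found _ y).
    * by rewrite leqNgt (leq_trans (leq_maxr _ _) Ht).
    * by apply: HT0; apply: leq_trans Ht; apply: leq_trans (leq_maxl _ _); apply: leq_maxl.
    * move=> z Hz; have [m Hm] := HT1 z Hz; exists m; apply: Hm.
      by apply: leq_trans Ht; apply: leq_trans (leq_maxl _ _); apply: leq_maxr.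
- destruct H as [v|g gs v w ws Hg Hgs].
  + by exists 0.
  + have [T1 HT1] := eval_run _ _ _ Hg.
    have [T2 HT2] := evals_run _ _ _ Hgs.
    exists (maxn T1 T2) => t Ht /=.
    rewrite HT1 ?(leq_trans (leq_maxl _ _) Ht) //.
    by rewrite HT2 ?(leq_trans (leq_maxr _ _) Ht).
Qed.

Section FG.
Variable k : nat.
Implicit Types (a c : letter k) (s t u v w x y z : seq (letter k)).

Definition flip (a : letter k) : letter k := (a.1, ~~ a.2).

Lemma flipK a : flip (flip a) = a.
Proof. by case: a => i x; rewrite /flip /= negbK. Qed.

Lemma cancelp_flip a (b : letter k) : cancelp a b -> b = flip a.
Proof.
rewrite /cancelp => /andP [/eqP E1 E2]; case: a b E1 E2 => [i x] [j y] /= <-.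
by case: x; case: y.
Qed.

Lemma cancelp_flipr a : cancelp a (flip a).
Proof. by rewrite /cancelp /= eqxx; case: a.2. Qed.

Lemma reduced_cons a s :
  reduced (a :: s) = (if s is b :: _ then ~~ cancelp a b else true) && reduced s.
Proof. by rewrite /reduced /=; case: s => //= b s. Qed.

Lemma reduced_behead a s : reduced (a :: s) -> reduced s.
Proof. by rewrite reduced_cons => /andP []. Qed.

Lemma push_reduced a s : reduced s -> reduced (push a s).
Proof.
case: s => [|b s] // Hs /=; case: ifP => H; first exact: reduced_behead Hs.
by rewrite reduced_cons H Hs.
Qed.

Lemma push_flip a t : reduced t -> push a (push (flip a) t) = t.
Proof.
case: t => [|b t] Ht /=; first by rewrite cancelp_flipr.
case: ifP => Hc /=; last by rewrite cancelp_flipr.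
have Eb := cancelp_flip Hc; rewrite flipK in Eb; subst b.
case: t Ht {Hc} => [|c t] // Ht /=.
by move: Ht; rewrite reduced_cons => /andP [/negbTE -> _].
Qed.

Lemma foldr_push_reduced t s : reduced t -> reduced (foldr (@push k) t s).
Proof. by move=> Ht; elim: s => //= a s IH; apply: push_reduced. Qed.

Lemma freduce_reduced s : reduced (freduce s).
Proof. exact: foldr_push_reduced. Qed.

Lemma push_foldr a x t : reduced t ->
  foldr (@push k) t (push a x) = push a (foldr (@push k) t x).
Proof.
move=> Ht; case: x => [|c x] //=; case: ifP => Hc //.
rewrite (cancelp_flip Hc) push_flip //; exact: foldr_push_reduced.
Qed.

Lemma foldr_freduce t s : reduced t -> foldr (@push k) t (freduce s) = foldr (@push k) t s.
Proof. by move=> Ht; elim: s => //= a s IH; rewrite push_foldr // IH. Qed.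

Lemma freduce_id s : reduced s -> freduce s = s.
Proof.
elim: s => // a s IH Hs /=; rewrite IH ?(reduced_behead Hs) //.
case: s Hs {IH} => // b s; rewrite reduced_cons => /andP [H _] /=.
by rewrite (negbTE H).
Qed.

Lemma fmul_red v w : reduced w -> fmul v w = foldr (@push k) w v.
Proof. by move=> Hw; rewrite /fmul /freduce foldr_cat -/(freduce w) freduce_id. Qed.

Lemma fmul_reduced v w : reduced (fmul v w).
Proof. exact: freduce_reduced. Qed.

Lemma fmulA x y z : fmul (fmul x y) z = fmul x (fmul y z).
Proof.
rewrite /fmul {1}/freduce foldr_cat -/(freduce z) foldr_freduce ?freduce_reduced //.
rewrite foldr_cat {2}/freduce foldr_cat -/(freduce z).
rewrite -/(freduce (freduce (y ++ z))) (freduce_id (freduce_reduced (y ++ z))).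
by rewrite /freduce foldr_cat.
Qed.

Definition finv s := rev (map flip s).

Lemma inv_cancel s (b : seq (letter k)) : reduced b -> foldr (@push k) (foldr (@push k) b s) (finv s) = b.
Proof.
elim: s b => //= a s IH b Hb.
rewrite /finv map_cons rev_cons -cats1 foldr_cat /=.
have := push_flip (flip a) (foldr_push_reduced s Hb); rewrite flipK => ->.
exact: IH.
Qed.

Lemma finvK s : finv (finv s) = s.
Proof. by rewrite /finv map_rev revK -map_comp map_id_in // => a _; rewrite /= flipK. Qed.

Lemma fmul_injl u (b b' : seq (letter k)) : reduced b -> reduced b' -> fmul u b = fmul u b' -> b = b'.
Proof.
move=> Hb Hb'; rewrite !fmul_red // => E.
by rewrite -(inv_cancel u Hb) E inv_cancel.
Qed.

Lemma fmul_nil x : fmul x [::] = freduce x.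
Proof. by rewrite /fmul cats0. Qed.

Lemma fmul_invr w : reduced w -> fmul w (finv w) = [::].
Proof.
move=> Hw; rewrite /fmul /freduce foldr_cat.
by have := inv_cancel (finv w) (isT : reduced [::]); rewrite finvK.
Qed.

Lemma fmul_injr w x x' : reduced w -> reduced x -> reduced x' -> fmul x w = fmul x' w -> x = x'.
Proof.
move=> Hw Hx Hx' E.
rewrite -(freduce_id Hx) -(freduce_id Hx') -!fmul_nil -(fmul_invr Hw) -!fmulA.
by rewrite E.
Qed.

Lemma size_push a s : size (push a s) <= (size s).+1.
Proof. by case: s => //= b s; case: ifP => //= _; lia. Qed.

Lemma size_foldr_push t s : size (foldr (@push k) t s) <= size s + size t.
Proof.
elim: s => //= a s IH; apply: leq_trans (size_push _ _) _; lia.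
Qed.

Lemma mem_words m s : (s \in words_of_len k m) = (size s == m).
Proof.
elim: m s => [|m IH] s; first by rewrite /= mem_seq1; case: s.
rewrite /words_of_len iterS -/(words_of_len k m).
apply/allpairsP/eqP.
  by move=> [[a s'] [_ /= Hs' ->]]; rewrite /= (eqP (etrans (esym (IH s')) Hs')).
case: s => [|a s] //= [Hs]; exists (a, s); split=> //=; first by rewrite mem_enum.
by rewrite IH Hs.
Qed.

Lemma uniq_words m : uniq (words_of_len k m).
Proof.
elim: m => [|m IH] //; rewrite /words_of_len iterS -/(words_of_len k m).
apply: allpairs_uniq => //; first exact: enum_uniq.
by move=> [a s] [a' s'] _ _ /= [-> ->].
Qed.

Lemma mem_flat n s : (s \in flatten [seq words_of_len k m | m <- iota 0 n.+1]) = (size s <= n).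
Proof.
apply/flattenP/idP.
  move=> [L /mapP [m Hm ->]]; rewrite mem_words => /eqP ->.
  by move: Hm; rewrite mem_iota.
move=> H; exists (words_of_len k (size s)); last by rewrite mem_words.
by apply: map_f; rewrite mem_iota.
Qed.

Lemma mem_ball n s : (s \in ball k n) = reduced s && (size s <= n).
Proof. by rewrite /ball mem_filter mem_flat. Qed.

Lemma uniq_ball n : uniq (ball k n).
Proof.
apply: filter_uniq; elim: n => [|n IH]; first by [].
rewrite (_ : n.+2 = n.+1 + 1); last by rewrite addn1.
rewrite iotaD map_cat flatten_cat cat_uniq IH add0n.
have -> : flatten [seq words_of_len k m | m <- iota n.+1 1] = words_of_len k n.+1.
  by rewrite /= cats0.
rewrite uniq_words andbT; apply/hasPn => s; rewrite mem_words => /eqP Hs.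
by rewrite mem_flat Hs ltnn.
Qed.

Lemma nil_ball n : [::] \in ball k n.
Proof. by rewrite mem_ball. Qed.

Lemma ball_pos n : 0 < size (ball k n).
Proof. by have := nil_ball n; case: (ball k n). Qed.

Lemma ball_growth1 m : size (ball k m.+1) <= (k.*2).+1 * size (ball k m).
Proof.
have -> : (k.*2).+1 * size (ball k m) =
   size (ball k m ++ [seq a :: s | a <- enum {: letter k}, s <- ball k m]).
  rewrite size_cat size_allpairs -cardE card_prod card_ord card_bool; lia.
apply: uniq_leq_size (uniq_ball _) _ => s; rewrite mem_cat !mem_ball.
move=> /andP [Hr Hs]; case: (leqP (size s) m) => Hm; first by rewrite Hr.
apply/orP; right; case: s Hr Hs Hm => [|a s] // Hr Hs Hm.
apply: allpairs_f; first by rewrite mem_enum.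
by rewrite mem_ball (reduced_behead Hr) -ltnS.
Qed.

Lemma ball_growth m j : size (ball k (m + j)) <= (k.*2).+1 ^ j * size (ball k m).
Proof.
elim: j => [|j IH]; first by rewrite addn0 mul1n.
rewrite addnS; apply: leq_trans (ball_growth1 _) _.
by rewrite expnS -mulnA leq_mul2l IH orbT.
Qed.

End FG.

Module GenericM.
Import Order.TTheory GRing.Theory Num.Theory.

Lemma count_le_uniq (T : eqType) (p : pred T) (s1 s2 : seq T) :
  uniq s1 -> {subset s1 <= s2} -> count p s1 <= count p s2.
Proof.
move=> U H; rewrite -!size_filter; apply: uniq_leq_size; first exact: filter_uniq.
by move=> x; rewrite !mem_filter => /andP [-> /H].
Qed.

Local Open Scope ring_scope.
Lemma rat_step (x y K : rat) : 0 < K -> (1 - K^-1) * x < y -> K * (x - y) < x.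
Proof.
move=> K0 Hd.
have : K * ((1 - K^-1) * x) < K * y by rewrite ltr_pM2l.
rewrite mulrA mulrBr mulr1 mulfV ?gt_eqF // => H.
lra.
Qed.

Local Close Scope ring_scope.

Lemma generic_pair k (S : pred (seq (letter k))) : UB_generic S ->
  forall w, reduced w -> exists v, [/\ reduced v, S v & S (fmul v w)].
Proof.
move=> HS w Hw.
set l := size w; set C := (k.*2).+1 ^ l.
have C0 : 0 < C by rewrite expn_gt0.
have eps0 : (0 < ((2 * C)%:R^-1 : rat))%R by rewrite invr_gt0 ltr0n muln_gt0 C0.
have [n [Hn [u [Hu Hd]]]] := HS _ eps0 l.
set T := tball u n; set L1 := tball u (n - l).
set B := size (ball k n); set c := count S T.
have F1 : size T <= B by rewrite /T /tball (leq_trans (size_undup _)) // size_map.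
have F2 : c <= size T := count_size _ _.
have F3 : size L1 = size (ball k (n - l)).
  rewrite /L1 /tball undup_id ?size_map // map_inj_in_uniq ?uniq_ball //.
  move=> b b' Hb Hb'; apply: fmul_injl.
    by move: Hb; rewrite mem_ball => /andP[].
  by move: Hb'; rewrite mem_ball => /andP[].
have F4 : B <= C * size L1 by rewrite F3 /B -{1}(subnK Hn) ball_growth.
have F5 : 0 < B := ball_pos _ _.
have memL1 : forall x, x \in L1 -> exists b, [/\ x = fmul u b, reduced b & size b <= n - l].
  move=> x; rewrite mem_undup => /mapP [b Hb ->]; exists b.
  by move: Hb; rewrite mem_ball => /andP [H1 H2].
have inT : forall b, reduced b -> size b <= n -> fmul u b \in T.
  by move=> b H1 H2; rewrite mem_undup; apply: map_f; rewrite mem_ball H1.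
case: (boolP (has (fun x => S x && S (fmul x w)) L1)) => [/hasP [x Hx /andP [H1 H2]]|Hno].
  by have [b [E _ _]] := memL1 x Hx; exists x; split => //; rewrite E; exact: fmul_reduced.
exfalso.
have G1 : size L1 <= count (predC S) T + count (predC S) T.
  have E : size L1 = count (predU (predC S) (fun x => ~~ S (fmul x w))) L1.
    rewrite -(count_predT L1); apply: eq_in_count => x Hx /=.
    by move/hasPn: Hno => /(_ x Hx); rewrite negb_and => ->.
  rewrite E; apply: leq_trans (_ : _ <= count (predC S) L1 + count (fun x => ~~ S (fmul x w)) L1) _.
    by rewrite -count_predUI leq_addr.
  apply: leq_add.
    apply: count_le_uniq; first exact: undup_uniq.
    move=> x /memL1 [b [-> Hb Hs]]; apply: inT => //; lia.
  rewrite (_ : count (fun x => ~~ S (fmul x w)) L1 = count (predC S) (map (fun x => fmul x w) L1));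
    last by rewrite count_map.
  apply: count_le_uniq.
    rewrite map_inj_in_uniq ?undup_uniq //.
    move=> x x' /memL1 [b [-> _ _]] /memL1 [b' [-> _ _]].
    by apply: fmul_injr => //; apply: fmul_reduced.
  move=> y /mapP [x /memL1 [b [-> Hb Hs]] ->].
  rewrite fmulA; apply: inT; first exact: fmul_reduced.
  rewrite fmul_red //; apply: leq_trans (size_foldr_push _ _) _; rewrite -/l; lia.
have G2 : count (predC S) T = size T - c by rewrite -(count_predC S T) addKn.
have G3 : 2 * C * (B - c) < B.
  rewrite -(ltr_nat rat) natrM natrB; last exact: leq_trans F2 F1.
  apply: rat_step; first by rewrite ltr0n muln_gt0 C0.
  by move: Hd; rewrite /density -/T -/c -/B ltr_pdivlMr ?ltr0n.
have H : size L1 <= 2 * (B - c).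
  apply: leq_trans G1 _; rewrite G2 addnn -mul2n leq_mul2l /=; lia.
have : B <= 2 * C * (B - c).
  by apply: leq_trans F4 _; rewrite (mulnC 2 C) -mulnA leq_mul2l H orbT.
lia.
Qed.

End GenericM.

Lemma sN_tri n s : tri s <= n < tri s.+1 -> sN n = s.
Proof.
move=> /andP [H1 H2]; rewrite /sN.
have E : {in iota 0 n, (fun j => tri j.+1 <= n) =1 (fun j => j < 0 + s)}.
  move=> j _ /=; rewrite add0n; apply/idP/idP.
    apply: contraLR; rewrite -leqNgt -ltnNge => H.
    by have := tri_mono H; move: H2; rewrite /= -/tri; lia.
  by move=> H; have := tri_mono H; rewrite /= -/tri; lia.
rewrite (eq_in_count E) -size_filter filter_iota_ltn ?size_iota //.
by have := tri_ge s; lia.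
Qed.

Lemma tri_exists n : exists s, tri s <= n < tri s.+1.
Proof.
elim: n => [|n [s /andP [H1 H2]]]; first by exists 0.
case: (ltnP n.+1 (tri s.+1)) => H.
  by exists s; rewrite H andbT; lia.
exists s.+1; move: H H2; rewrite /= -/tri; lia.
Qed.

Lemma pair_surj n : cpairN (fstN n) (sndN n) = n.
Proof.
have [s Hs] := tri_exists n.
have Es := sN_tri Hs; move: Hs => /andP [H1 H2].
rewrite /cpairN /fstN /sndN Es; move: H2 => /=; rewrite -/tri.
move=> H2; have -> : s - (n - tri s) + (n - tri s) = s by lia.
lia.
Qed.

Lemma enc_surj n : exists l, enc_list l = n.
Proof.
elim: n {-2}n (leqnn n) => [|N IH] n Hn; first by exists [::]; move: Hn; rewrite leqn0 => /eqP ->.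
case: n Hn => [|m] Hm; first by exists [::].
have [l Hl] := IH (sndN m) (leq_trans (leq_subr _ _ : sndN m <= m) Hm).
exists (fstN m :: l); by rewrite enc_cons Hl /ConsN pair_surj.
Qed.

Lemma cancelN_enc k (a b : letter k) : cancelN (enc_letter a) (enc_letter b) = cancelp a b.
Proof.
case: a b => [i x] [j y]; rewrite /cancelN /cancelp /enc_letter /=.
rewrite !(addnC _.*2) !half_bit_double.
case: (eqVneq i j) => [->|Hij]; first by rewrite eqxx eqn_add2r; case: x; case: y.
have -> : (val i == val j) = false by apply/negbTE; rewrite val_eqE.
done.
Qed.

Lemma enc_push k (a : letter k) s : enc_word (push a s) = pushN (enc_letter a) (enc_word s).
Proof.
rewrite /enc_word; case: s => [|b s] /=.
  by rewrite cpairE.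
rewrite /pushN cpairE -/(ConsN _ _) ConsN_neq0 hd_cons tl_cons cancelN_enc.
by case: (cancelp a b) => //=; rewrite !cpairE.
Qed.

Lemma enc_foldr k (t s : seq (letter k)) :
  foldr pushN (enc_word t) (map (@enc_letter k) s) = enc_word (foldr (@push k) t s).
Proof. by elim: s => //= a s ->; rewrite enc_push. Qed.

Section Dec.
Variable k' : nat.
Definition Kc := (k'.+1).*2.-1.
Definition dec (x : nat) : letter k'.+1 := (inord (x./2), odd x).
Lemma enc_dec x : x <= Kc -> enc_letter (dec x) = x.
Proof.
move=> Hx; rewrite /enc_letter /dec /= inordK; first by rewrite addnC odd_double_half.
rewrite ltnS; have := odd_double_half x; move: Hx; rewrite /Kc; case: (odd x) => /=; lia.
Qed.
Lemma enc_le (a : letter k'.+1) : enc_letter a <= Kc.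
Proof. case: a => [i x]; rewrite /enc_letter /Kc /=; have := ltn_ord i; case: x => /=; lia. Qed.
End Dec.

Section Grp.
Variables (G : Type) (mul : G -> G -> G) (inv : G -> G) (one : G).
Hypothesis Hgrp : is_group mul inv one.
Variables (k : nat) (gen : 'I_k -> G).

Lemma mulxV x : mul x (inv x) = one.
Proof.
case: Hgrp => A [L V].
have E : mul (mul x (inv x)) (mul x (inv x)) = mul x (inv x).
  by rewrite -A (A (inv x)) V L.
set p := mul x (inv x) in E *; by rewrite -(V p) -{3}E A V L.
Qed.

Lemma mulx1 x : mul x one = x.
Proof. case: Hgrp => A [L V]; by rewrite -(V x) A mulxV L. Qed.

Lemma mul_cancel x a b : mul x a = mul x b -> a = b.
Proof.
case: Hgrp => A [L V] E.
by rewrite -(L a) -(L b) -(V x) -!A E.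
Qed.

Definition gl (a : letter k) := if a.2 then inv (gen a.1) else gen a.1.

Lemma evalw_cons a s : evalw mul inv one gen (a :: s) = mul (gl a) (evalw mul inv one gen s).
Proof. by []. Qed.

Lemma evalw_push a s : evalw mul inv one gen (push a s) = mul (gl a) (evalw mul inv one gen s).
Proof.
case: s => [|b s] //=; case: ifP => // Hc.
rewrite (cancelp_flip Hc) -/(evalw mul inv one gen s).
case: Hgrp => A [L V]; rewrite A /gl /flip /=.
by case: a.2; rewrite /= ?V ?mulxV L.
Qed.

Lemma evalw_foldr t s : evalw mul inv one gen (foldr (@push k) t s) =
  mul (evalw mul inv one gen s) (evalw mul inv one gen t).
Proof.
case: Hgrp => A [L V].
elim: s => [|a s IH] /=; first by rewrite L.
by rewrite evalw_push IH A.
Qed.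
End Grp.

Theorem theorem2p9 (k : nat) (G : Type) (mul : G -> G -> G) (inv : G -> G) (one : G)
  (gen : 'I_k -> G)
  (Hgrp : is_group mul inv one) (Hgen : generates mul inv one gen)
  (S : pred (seq (letter k)))
  (HS : UB_generic S)
  (HEq : solvable_EqP_on mul inv one gen (fun w1 w2 => S w1 /\ S w2)) :
  solvable_WP mul inv one gen.
Proof.
case: k gen Hgen S HS HEq => [|k'] gen Hgen S HS HEq.
  exists (constc 1) => w Hw; split.
    by move=> _; apply: (@const_c 1 1).
  case: w Hw => [|a w] _; first by [].
  by case: a => -[].
have [c [Hhalt Hcorr]] := HEq.
set K := Kc k'.
pose Cr := CComp Cfst [:: P0].
pose Ct := CComp Csnd [:: P0].
pose CA := CComp (CFred K) [:: Cr; Cr; constc 0].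
pose CB := CComp (CFred K) [:: Cr; Cr; P1].
pose CG := CComp (B c 2) [:: CA; CB; Ct].
pose Gs := fun m e => ocode (run (sndN m) c
   [:: fredN K (fstN m) (fstN m) 0; fredN K (fstN m) (fstN m) e]).
have HG : computes CG 2 (fun v => Gs (ar v 0) (ar v 1)).
  have HB : computes3 (B c 2) (fun x y z => Bspec c 2 [:: x; y; z]).
    by rewrite /computes3; apply: computes_ext (@B_c c 2) => -[|x [|y [|z []]]].
  have Hr := ap1_c fst_c (proj_c (isT : 0 < 2)).
  have := ap3_c HB (ap3_c (fred_c K) Hr Hr (@const_c 0 2))
     (ap3_c (fred_c K) Hr Hr (proj_c (isT : 1 < 2))) (ap1_c snd_c (proj_c (isT : 0 < 2))).
  by apply: computes_ext.
pose Q := CComp Cisz [:: CG].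
have HQ : computes Q 2 (fun v => nat_of_bool (Gs (ar v 0) (ar v 1) == 0)) := ap1_c isz_c HG.
exists (CComp Cpred [:: CComp CG [:: CMu Q; P0]]) => w Hw.
set e := enc_word w.
have Hex : exists m, Gs m e != 0.
  have [v [Hv Sv Svw]] := GenericM.generic_pair HS Hw.
  have [y0 Hy0] := Hhalt v (fmul v w) Hv (fmul_reduced _ _) (conj Sv Svw).
  have [T0 HT0] := eval_run Hy0.
  set r0 := enc_list (rev (map (@enc_letter _) v)).
  exists (cpairN r0 T0).
  rewrite /Gs fst_pair snd_pair !fred_enc_full.
  have Hmap : rev (map (minn^~ K) (rev (map (@enc_letter _) v))) = map (@enc_letter _) v.
    rewrite map_rev revK; apply: map_id_in => x /mapP [a _ ->]; exact: minn_idPl (enc_le a).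
  have E0 : foldr pushN 0 (map (@enc_letter _) v) = enc_word (foldr (@push _) [::] v) :=
    enc_foldr [::] v.
  rewrite Hmap E0 enc_foldr -/(freduce v) freduce_id // -fmul_red //.
  by rewrite HT0.
have [y Hy Hmin] := ex_minnP Hex.
have Hev : eval (CComp CG [:: CMu Q; P0]) [:: e] (Gs y e).
  apply: ev_comp (HG [:: y; e] erefl).
  apply: evs_cons; last by apply: evs_cons; [exact: ev_proj|exact: evs_nil].
  apply: ev_mu.
    by have := HQ [:: y; e] erefl; rewrite /ar /= (negbTE Hy).
  move=> z Hz; exists 0; have := HQ [:: z; e] erefl; rewrite /ar /=.
  suff -> : (Gs z e == 0) = true by [].
  apply/eqP; case: (eqVneq (Gs z e) 0) => // Hne; have := Hmin z Hne; lia.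
have HW := ev_comp (evs_cons Hev (evs_nil _)) (@pred_c [:: Gs y e] erefl).
move: Hy HW; rewrite /ar /= {1 2}/Gs.
case Er: (run _ c _) => [r|] // _ HW.
have Hc := run_sound Er.
have [l Hl] := enc_surj (fstN y).
set v' := rev (map (fun x => dec k' (minn x K)) l).
have Hmv : map (@enc_letter _) v' = rev (map (minn^~ K) l).
  rewrite /v' map_rev -map_comp; congr rev; apply: eq_map => x /=.
  by apply: enc_dec; exact: geq_minr.
have EA : fredN K (fstN y) (fstN y) 0 = enc_word (foldr (@push _) [::] v').
  have E0 : foldr pushN 0 (map (@enc_letter _) v') = enc_word (foldr (@push _) [::] v') :=
    enc_foldr [::] v'.
  by rewrite -Hl fred_enc_full -Hmv E0.
have EB : fredN K (fstN y) (fstN y) e = enc_word (foldr (@push _) w v').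
  by rewrite -Hl fred_enc_full -Hmv enc_foldr.
rewrite EA EB in Hc.
have [C1 C2] := Hcorr _ _ _ (foldr_push_reduced _ (isT : reduced [::])) (foldr_push_reduced _ Hw) Hc.
rewrite !(evalw_foldr Hgrp) in C1 C2.
split.
  by move=> Hw1; rewrite (C1 _) in HW; last by rewrite Hw1.
move=> Hw1; rewrite (C2 _) in HW => // E.
apply: Hw1; symmetry; apply: (@mul_cancel _ _ _ _ Hgrp (evalw mul inv one gen v')); exact: E.
Qed.
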